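(* Let $\Sigma$ be an alphabet with $\sigma\ge2$ letters, let $k\ge4$ and $n=\sigma^{k-2}$. Let $S=s_1\cdots s_n$ be a cyclic de Bruijn sequence of order $k-2$ over $\Sigma$. Let $X$ be the string $S$ followed by its first $k$ characters $s_1\cdots s_k$. Indices are taken modulo $n$. For $i=1,\dots,n$: - let $y_i=s_i s_{i+1}\cdots s_{i+k-1}$ be the cyclic $k$-mer of $S$ starting at position $i$; - choose a letter $b_i\neq s_{i+k}$ and set $z_i=s_{i+1}\cdots s_{i+k-1}b_i$. Let $I=\{X\}\cup\{y_ib_i : 1\le i\le n\}$. Then: 1. The order-$k$ node-centric de Bruijn graph $G=(V,E)$ of $I$ has exactly the $2n$ nodes $y_1,\dots,y_n,z_1,\dots,z_n$ (all distinct), and its edges are exactly $(y_i,y_{i+1})$ and $(y_i,z_i)$ for $i=1,\dots,n$; that is, $G$ is a directed $n$-cycle with one out-degree-$0$ pendant node attached to each cycle node. 2. $F=E$ is a necklace cover of $G$ consisting of a single closed necklace with $N_O=0$ and $N_L=n$, whose necklace string has $2n$ letters and $2n$ parentheses, i.e. $4n$ symbols. 3. Every spectrum-preserving string set of $I$ without repetitions has weight at least $(k+1)n$, and weight $(k+1)n$ is attained. In particular, the necklace representation uses a fraction $4/(k+1)$ of the symbols of a minimum no-repetition SPSS.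
   Context: A cyclic de Bruijn sequence of order $m$ over $\Sigma$ is a string $S$ of length $\sigma^m$ such that every string of length $m$ over $\Sigma$ occurs exactly once as a cyclic substring of $S$ (i.e. as a substring of the infinite periodic extension starting at one of the positions $1,\dots,|S|$). $\mathrm{spec}_k(I)$ denotes the set of length-$k$ substrings of strings in $I$. The order-$k$ node-centric de Bruijn graph of $I$ is $G=(V,E)$ with $V=\mathrm{spec}_k(I)$ and $(u,v)\in E$ iff the last $k-1$ characters of $u$ equal the first $k-1$ characters of $v$; the label of $(u,v)$ is the last character of $v$. A necklace cover is an edge set $F\subseteq E$ with every node of in-degree at most $1$ in $(V,F)$. Its necklaces are the weakly connected components of $(V,F)$. A necklace is closed if it has no node of in-degree $0$ in $(V,F)$, open otherwise. $N_O$ is the number of open necklaces, and $N_L=(\#\text{nodes of out-degree }0\text{ in }(V,F))-N_O$. The necklace string of a closed necklace with cycle $v_1\to\cdots\to v_c$ is formed as follows: - take one character per cycle node, namely the label of its entering edge; - immediately after the character of each cycle node $v$, insert $\mathtt{(}\mathrm{enc}(w)\mathtt{)}$ for each child $w$ of $v$ not on the cycle; - here $\mathrm{enc}(w)$ is the label of the edge entering $w$ when $w$ has no children. A spectrum-preserving string set (SPSS) of $I$ without repetitions is a finite set $S'$ of strings, each of length at least $k$, such that $\mathrm{spec}_k(S')=\mathrm{spec}_k(I)$ and each $k$-mer of $\mathrm{spec}_k(I)$ occurs exactly once in total among all occurrences in the strings of $S'$. Its weight is $\sum_{z\in S'}|z|$. *)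

(* Defs.v *)
From mathcomp Require Import all_boot.
Set Implicit Arguments.
Unset Strict Implicit.
Unset Printing Implicit Defensive.

Section Strings.
Variable Sigma : finType.

(* Positions are 0-based; index j is read modulo the length of S. *)
Definition cnth (S : seq Sigma) (j : nat) : option Sigma :=
  if S is x :: _ then Some (nth x S (j %% size S)) else None.

Definition cyc_sub (S : seq Sigma) (i m : nat) : seq Sigma :=
  if S is x :: _ then mkseq (fun j => nth x S ((i + j) %% size S)) m else [::].

Definition cyclic_deBruijn (S : seq Sigma) (m : nat) : Prop :=
  size S = #|Sigma| ^ m /\
  forall w : seq Sigma, size w = m ->
    count (fun i => cyc_sub S i m == w) (iota 0 (size S)) = 1.

Definition kmers (k : nat) (s : seq Sigma) : seq (seq Sigma) :=
  [seq take k (drop i s) | i <- iota 0 ((size s).+1 - k)].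

Definition spec (k : nat) (I : seq (seq Sigma)) : {set k.-tuple Sigma} :=
  [set w : k.-tuple Sigma | has (fun s => val w \in kmers k s) I].

Definition dbgV (k : nat) (I : seq (seq Sigma)) := spec k I.
Definition dbgE (k : nat) (I : seq (seq Sigma)) : rel (k.-tuple Sigma) :=
  fun u v => [&& u \in dbgV k I, v \in dbgV k I &
                 drop 1 (val u) == take (k - 1) (val v)].

Definition spss_norep (k : nat) (I S' : seq (seq Sigma)) : Prop :=
  [/\ uniq S', all (fun z => k <= size z) S', spec k S' = spec k I &
      forall w : k.-tuple Sigma, w \in spec k I ->
        sumn [seq count (pred1 (val w)) (kmers k z) | z <- S'] = 1].

Definition weight (S' : seq (seq Sigma)) : nat := sumn [seq size z | z <- S'].

End Strings.

Section Necklaces.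
Variable T : finType.
Variables (V : {set T}) (F : rel T).

Definition indeg (v : T) : nat := #|[set u in V | F u v]|.
Definition outdeg (v : T) : nat := #|[set w in V | F v w]|.

Definition necklace_cover (E : rel T) : Prop :=
  (forall u v, F u v -> E u v) /\ (forall v, v \in V -> indeg v <= 1).

Definition weak_adj : rel T :=
  fun u v => [&& u \in V, v \in V & F u v || F v u].

Definition necklaces : {set {set T}} :=
  [set [set w in V | connect weak_adj v w] | v in V].

Definition open_necklace (C : {set T}) : bool := [exists v in C, indeg v == 0].

Definition N_O : nat := #|[set C in necklaces | open_necklace C]|.
Definition N_L : nat := #|[set v in V | outdeg v == 0]| - N_O.

Definition is_cycle (cyc : seq T) : bool :=
  [&& cyc != [::], uniq cyc, all (fun v => v \in V) cyc & cycle F cyc].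

End Necklaces.

Inductive nsym (Sigma : Type) := Letter of Sigma | LPar | RPar.
Arguments LPar {Sigma}.
Arguments RPar {Sigma}.

Definition is_letter (Sigma : Type) (x : nsym Sigma) : bool :=
  if x is Letter _ then true else false.
Definition is_paren (Sigma : Type) (x : nsym Sigma) : bool := ~~ is_letter x.

(* label of the edge entering node v: the last character of v
   (a one-letter list for a nonempty node) *)
Definition lab (Sigma : finType) (k : nat) (v : k.-tuple Sigma) : seq (nsym Sigma) :=
  [seq Letter c | c <- drop (size (val v)).-1 (val v)].

(* necklace string of a closed necklace with cycle cyc:
   for each cycle node v, the label of its entering edge, followed by
   (enc w) for each child w of v not on the cycle, where enc w is the label
   of the edge entering w (the definition for childless w). *)
Definition necklace_string (Sigma : finType) (k : nat)
    (V : {set k.-tuple Sigma}) (F : rel (k.-tuple Sigma))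
    (cyc : seq (k.-tuple Sigma)) : seq (nsym Sigma) :=
  flatten [seq lab v ++
     flatten [seq LPar :: lab w ++ [:: RPar]
             | w <- enum [set w in V | F v w & w \notin cyc]]
   | v <- cyc].

Arguments spec {Sigma} k I.
Arguments dbgV {Sigma} k I.
Arguments dbgE {Sigma} k I.
Arguments spss_norep {Sigma} k I S'.
Arguments kmers {Sigma} k s.
Arguments cyc_sub {Sigma} S i m.
Arguments cnth {Sigma} S j.
Arguments cyclic_deBruijn {Sigma} S m.

(* Main.v *)
Require Import Defs.
From mathcomp Require Import all_boot zify.
Set Implicit Arguments.
Unset Strict Implicit.
Unset Printing Implicit Defensive.

Section Main.
Variable Sigma : finType.
Variables (k : nat) (S : seq Sigma) (b : nat -> Sigma) (x0 : Sigma).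
Hypothesis Hs : 2 <= #|Sigma|.
Hypothesis Hk : 4 <= k.
Hypothesis HdB : cyclic_deBruijn S (k - 2).
Hypothesis Hb : forall i, i < size S -> Some (b i) != cnth S (i + k).

Local Notation n := (size S).

Lemma pow2_ge j : j.+4 <= 2 ^ j.+2.
Proof.
elim: j => [//|j IH].
rewrite (expnS 2 j.+2); lia.
Qed.

Lemma n_ge_k : k <= n.
Proof.
case: HdB => -> _.
have -> : k - 2 = (k-4).+2 by lia.
have H1 := pow2_ge (k-4).
have H2 : 2 ^ (k-4).+2 <= #|Sigma| ^ (k-4).+2 by rewrite leq_exp2r.
lia.
Qed.

Lemma n_gt0 : 0 < n.
Proof. have := n_ge_k; lia. Qed.

Definition s j := nth x0 S (j %% n).

Lemma s_congr a c : a %% n = c %% n -> s a = s c.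
Proof. by rewrite /s => ->. Qed.

Lemma s_shift a c t : a %% n = c %% n -> s (a + t) = s (c + t).
Proof. by move=> H; apply: s_congr; rewrite -modnDml H modnDml. Qed.

Lemma cyc_subE i l : cyc_sub S i l = mkseq (fun t => s (i + t)) l.
Proof.
rewrite /cyc_sub /s; case: S n_gt0 => [//|x S'] Hn.
apply: eq_mkseq => t; apply: set_nth_default; by rewrite ltn_mod.
Qed.

Lemma cnthE j : cnth S j = Some (s j).
Proof.
rewrite /cnth /s; case: S n_gt0 => [//|x S'] Hn.
congr Some; apply: set_nth_default; by rewrite ltn_mod.
Qed.

Lemma mkseq_ext (f g : nat -> Sigma) l :
  (forall t, t < l -> f t = g t) -> mkseq f l = mkseq g l.
Proof.
move=> H; apply: (@eq_from_nth _ x0); rewrite !size_mkseq // => t Ht.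
by rewrite !nth_mkseq // H.
Qed.

Lemma mkseq_eq (f g : nat -> Sigma) l :
  mkseq f l = mkseq g l -> forall t, t < l -> f t = g t.
Proof.
move=> H t Ht; have := congr1 (fun q => nth x0 q t) H.
by rewrite /= !nth_mkseq.
Qed.

Local Notation m := (k - 2).

Lemma win i j : (forall t, t < m -> s (i + t) = s (j + t)) -> i %% n = j %% n.
Proof.
move=> H.
case: HdB => _ /(_ (mkseq (fun t => s (i + t)) m)).
rewrite size_mkseq => /(_ erefl) Hc.
have Pi : forall a, a %% n = i %% n -> cyc_sub S a m == mkseq (fun t => s (i + t)) m.
  move=> a Ha; rewrite cyc_subE; apply/eqP/mkseq_ext => t _; exact: s_shift.
have Pj : cyc_sub S (j %% n) m == mkseq (fun t => s (i + t)) m.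
  rewrite cyc_subE; apply/eqP/mkseq_ext => t Ht; rewrite H //; apply: s_shift.
  by rewrite modn_mod.
have Pi' := Pi (i %% n) (modn_mod _ _).
apply/eqP; apply/negPn/negP => Hne.
have : 2 <= count (fun a => cyc_sub S a m == mkseq (fun t => s (i + t)) m) (iota 0 n).
  rewrite -size_filter.
  have -> : 2 = size [:: i %% n; j %% n] by [].
  apply: uniq_leq_size; first by rewrite /= inE andbT.
  move=> a; rewrite !inE => /orP [] /eqP ->; rewrite mem_filter ?Pi' ?Pj mem_iota /= ltn_mod n_gt0 //.
by rewrite Hc.
Qed.


Definition Y i := cyc_sub S i k.
Definition Z i := cyc_sub S i.+1 (k - 1) ++ [:: b i].

Lemma YE i : Y i = mkseq (fun t => s (i + t)) k.
Proof. exact: cyc_subE. Qed.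

Lemma ZE i : Z i = mkseq (fun t => if t < k - 1 then s (i.+1 + t) else b i) k.
Proof.
rewrite /Z cyc_subE; apply: (@eq_from_nth _ x0).
  rewrite size_cat !size_mkseq /=; lia.
rewrite size_cat size_mkseq /= => t Ht.
rewrite nth_mkseq; last lia.
rewrite nth_cat size_mkseq; case: ifP => Ht1; first by rewrite nth_mkseq.
by have -> : t - (k - 1) = 0 by lia.
Qed.

Lemma sizeY i : size (Y i) = k. Proof. by rewrite YE size_mkseq. Qed.
Lemma sizeZ i : size (Z i) = k. Proof. by rewrite ZE size_mkseq. Qed.

Lemma b_neq j : j < n -> b j <> s (j + k).
Proof. move=> Hj Heq; have := Hb Hj; by rewrite cnthE Heq eqxx. Qed.

Lemma Y_mod i j : i %% n = j %% n -> Y i = Y j.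
Proof. move=> H; rewrite !YE; apply: mkseq_ext => t _; exact: s_shift. Qed.

Lemma Y_inj i j : Y i = Y j -> i %% n = j %% n.
Proof.
rewrite !YE => /mkseq_eq H; apply: win => t Ht; apply: H; lia.
Qed.

Lemma modS_inj i j : i.+1 %% n = j.+1 %% n -> i %% n = j %% n.
Proof. by move=> H; apply/eqP; rewrite -(eqn_modDr 1) !addn1 H. Qed.

Lemma Z_inj i j : Z i = Z j -> i %% n = j %% n.
Proof.
rewrite !ZE => /mkseq_eq H; apply: modS_inj; apply: win => t Ht.
have := H t; rewrite ifT; last lia. rewrite ifT; last lia. apply; lia.
Qed.

Lemma YZ_neq i j : j < n -> Y i <> Z j.
Proof.
move=> Hj; rewrite YE ZE => /mkseq_eq H.
have Hm : i %% n = j.+1 %% n.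
  apply: win => t Ht; have := H t; rewrite ifT; last lia. apply; lia.
apply: (b_neq Hj).
have := H (k - 1); rewrite ltnn => <-; last lia.
have -> : j + k = j.+1 + (k - 1) by lia.
exact: s_shift.
Qed.

Definition ov (u v : seq Sigma) := drop 1 u = take (k - 1) v.

Lemma ovE f g : ov (mkseq f k) (mkseq g k) <-> (forall t, t < k - 1 -> f t.+1 = g t).
Proof.
rewrite /ov.
have -> : drop 1 (mkseq f k) = mkseq (fun t => f t.+1) (k - 1).
  apply: (@eq_from_nth _ x0); first by rewrite size_drop !size_mkseq.
  rewrite size_drop size_mkseq => t Ht; rewrite nth_drop !nth_mkseq //; lia.
have -> : take (k - 1) (mkseq g k) = mkseq g (k - 1).
  apply: (@eq_from_nth _ x0); first by rewrite size_takel !size_mkseq //; lia.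
  rewrite size_takel ?size_mkseq; last lia.
  move=> t Ht; rewrite nth_take // !nth_mkseq //; lia.
split; [exact: mkseq_eq | exact: mkseq_ext].
Qed.

Lemma ov_YY i : ov (Y i) (Y i.+1).
Proof. rewrite !YE; apply/ovE => t _; by rewrite addnS addSn. Qed.

Lemma ov_YZ i : ov (Y i) (Z i).
Proof. rewrite YE ZE; apply/ovE => t Ht; by rewrite Ht addnS addSn. Qed.

Lemma ov_Y_Y i j : ov (Y i) (Y j) -> j %% n = i.+1 %% n.
Proof.
rewrite !YE => /ovE H; apply: win => t Ht; rewrite -H; last lia.
by rewrite addnS addSn.
Qed.

Lemma ov_Y_Z i j : ov (Y i) (Z j) -> j %% n = i %% n.
Proof.
rewrite YE ZE => /ovE H; apply: modS_inj; apply: win => t Ht.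
have := H t; rewrite ifT; last lia. move=> <-; last lia.
by rewrite addnS addSn.
Qed.

Lemma ov_Z_Y i j : j < n -> ov (Z j) (Y i) -> False.
Proof.
move=> Hj; rewrite YE ZE => /ovE H.
have Hm : i %% n = j.+2 %% n.
  apply: win => t Ht; have := H t; rewrite ifT; last lia. move=> <-; last lia.
  by rewrite addSn addnS.
apply: (b_neq Hj).
have := H (k - 2); rewrite ifF; last lia. move=> ->; last lia.
have -> : j + k = j.+2 + (k - 2) by lia.
exact: s_shift.
Qed.

Lemma ov_Z_Z i j : j < n -> ov (Z j) (Z i) -> False.
Proof.
move=> Hj; rewrite !ZE => /ovE H.
have Hm : i.+1 %% n = j.+2 %% n.
  apply: win => t Ht; have := H t; rewrite ifT; last lia. rewrite ifT; last lia.
  move=> <-; last lia. by rewrite addSn addnS.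
apply: (b_neq Hj).
have := H (k - 2); rewrite ifF; last lia. rewrite ifT; last lia. move=> ->; last lia.
have -> : j + k = j.+2 + (k - 2) by lia.
exact: s_shift.
Qed.


Definition X := S ++ take k S.
Definition S0 := [seq Y i ++ [:: b i] | i <- iota 0 n].
Definition I := X :: S0.

Lemma take_drop_mkseq (L : seq Sigma) p :
  p + k <= size L -> take k (drop p L) = mkseq (fun t => nth x0 L (p + t)) k.
Proof.
move=> H; apply: (@eq_from_nth _ x0).
  rewrite size_takel ?size_mkseq // size_drop; lia.
rewrite size_takel ?size_drop; last lia.
move=> t Ht; by rewrite nth_take // nth_drop nth_mkseq.
Qed.

Lemma kmers_yb i : kmers k (Y i ++ [:: b i]) = [:: Y i; Z i].
Proof.
rewrite /kmers size_cat sizeY.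
have -> : (k + size [:: b i]).+1 - k = 2 by rewrite /=; lia.
rewrite /= drop0 take_size_cat ?sizeY //; congr [:: _; _].
rewrite take_drop_mkseq; last by rewrite size_cat sizeY /=; lia.
rewrite ZE; apply: mkseq_ext => t Ht.
rewrite nth_cat sizeY; case: ifP => H1.
  rewrite ifT; last lia. rewrite YE nth_mkseq //; congr s; lia.
rewrite ifF; last lia. by have -> : 1 + t - k = 0 by lia.
Qed.

Lemma nthX q : q < n + k -> nth x0 X q = s q.
Proof.
move=> Hq; rewrite /X nth_cat /s; case: ifP => H1; first by rewrite modn_small.
have Hnk := n_ge_k.
rewrite nth_take; last lia.
congr nth; have -> : q = (q - n) + n by lia.
rewrite modnDr modn_small; lia.
Qed.

Lemma kmers_X : kmers k X = [seq Y p | p <- iota 0 n.+1].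
Proof.
have Hnk := n_ge_k.
rewrite /kmers /X size_cat size_takel //.
have -> : (n + k).+1 - k = n.+1 by lia.
apply/eq_in_map => p; rewrite mem_iota => /andP [_ Hp].
rewrite -/X take_drop_mkseq; last by rewrite size_cat size_takel //; lia.
rewrite YE; apply: mkseq_ext => t Ht; apply: nthX; lia.
Qed.

Definition node (x : seq Sigma) := exists2 i, i < n & (x = Y i \/ x = Z i).

Lemma in_specS0 (w : k.-tuple Sigma) : w \in spec k S0 <-> node (val w).
Proof.
rewrite inE has_map; split.
  move/hasP => [i]; rewrite mem_iota /= kmers_yb !inE => Hi /orP [] /eqP H;
  exists i => //; first [by left | by right].
move=> [i Hi H]; apply/hasP; exists i; first by rewrite mem_iota.
by rewrite /= kmers_yb !inE; case: H => ->; rewrite eqxx ?orbT.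
Qed.

Lemma in_specI (w : k.-tuple Sigma) : w \in spec k I <-> node (val w).
Proof.
have -> : (w \in spec k I) = (val w \in kmers k X) || (w \in spec k S0) by rewrite !inE.
rewrite -in_specS0; split; last by move=> ->; rewrite orbT.
case/orP => //; rewrite kmers_X => /mapP [p _ Hp]; apply/in_specS0.
exists (p %% n); first by rewrite ltn_mod n_gt0.
left; rewrite Hp; apply: Y_mod; by rewrite modn_mod.
Qed.


Lemma inV (w : k.-tuple Sigma) : w \in dbgV k I <-> node (val w).
Proof. exact: in_specI. Qed.

Lemma mod_lt_eq i j : i < n -> j < n -> i %% n = j %% n -> i = j.
Proof. by move=> Hi Hj; rewrite !modn_small. Qed.

Lemma Eval (u v : k.-tuple Sigma) : dbgE k I u v <-> exists2 i, i < n &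
  ((val u = Y i /\ val v = Y i.+1) \/ (val u = Y i /\ val v = Z i)).
Proof.
split.
  move/and3P => [Hu Hv /eqP Ho].
  move/inV : Hu => [i Hi [Hu|Hu]]; move/inV : Hv => [j Hj [Hv|Hv]];
    rewrite Hu Hv in Ho.
  - exists i => //; left; split => //; rewrite Hv; apply: Y_mod.
    exact: (ov_Y_Y Ho).
  - exists i => //; right; split => //; rewrite Hv.
    by rewrite (mod_lt_eq Hj Hi (ov_Y_Z Ho)).
  - by case: (ov_Z_Y Hi Ho).
  - by case: (ov_Z_Z Hi Ho).
move=> [i Hi [[Hu Hv]|[Hu Hv]]]; apply/and3P; split.
- by apply/inV; exists i => //; left.
- apply/inV; exists (i.+1 %% n); first by rewrite ltn_mod n_gt0.
  by left; rewrite Hv; apply: Y_mod; rewrite modn_mod.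
- by apply/eqP; rewrite Hu Hv; exact: ov_YY.
- by apply/inV; exists i => //; left.
- by apply/inV; exists i => //; right.
- by apply/eqP; rewrite Hu Hv; exact: ov_YZ.
Qed.

Lemma sizeYb i : size (Y i) == k. Proof. by rewrite sizeY. Qed.
Lemma sizeZb i : size (Z i) == k. Proof. by rewrite sizeZ. Qed.
Definition ty i : k.-tuple Sigma := Tuple (sizeYb i).
Definition tz i : k.-tuple Sigma := Tuple (sizeZb i).

Lemma ty_mod i j : i %% n = j %% n -> ty i = ty j.
Proof. by move=> H; apply: val_inj; exact: Y_mod. Qed.

Lemma ty_inj i j : ty i = ty j -> i %% n = j %% n.
Proof. by move/(congr1 val) => /= /Y_inj. Qed.

Lemma tz_inj i j : tz i = tz j -> i %% n = j %% n.
Proof. by move/(congr1 val) => /= /Z_inj. Qed.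

Lemma ty_tz i j : j < n -> ty i <> tz j.
Proof. by move=> Hj /(congr1 val) /= /(YZ_neq Hj). Qed.

Lemma tyV i : ty i \in dbgV k I.
Proof.
apply/inV; exists (i %% n); first by rewrite ltn_mod n_gt0.
by left; apply: Y_mod; rewrite modn_mod.
Qed.

Lemma tzV i : i < n -> tz i \in dbgV k I.
Proof. by move=> Hi; apply/inV; exists i => //; right. Qed.

Lemma nodeV w : w \in dbgV k I -> exists2 i, i < n & (w = ty i \/ w = tz i).
Proof.
move/inV => [i Hi [H|H]]; exists i => //; [left|right]; exact: val_inj.
Qed.

Lemma E_ty i : dbgE k I (ty i) (ty i.+1).
Proof.
apply/and3P; split; [exact: tyV | exact: tyV |].
by apply/eqP; exact: ov_YY.
Qed.

Lemma E_tz i : i < n -> dbgE k I (ty i) (tz i).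
Proof.
move=> Hi; apply/and3P; split; [exact: tyV | exact: tzV |].
by apply/eqP; exact: ov_YZ.
Qed.

Lemma E_from_tz i w : i < n -> ~~ dbgE k I (tz i) w.
Proof.
move=> Hi; apply/negP => /Eval [j Hj [[H _]|[H _]]]; move: H => /= H;
by apply: (YZ_neq Hi); rewrite H.
Qed.

Lemma E_from_ty i w : i < n -> dbgE k I (ty i) w -> w = ty i.+1 \/ w = tz i.
Proof.
move=> Hi /Eval [j Hj [[H1 H2]|[H1 H2]]]; move: H1 => /= /Y_inj H1.
  left; apply: val_inj; rewrite H2 /=; apply: Y_mod.
  by rewrite -addn1 -modnDml -H1 modnDml addn1.
right; apply: val_inj; rewrite H2 /=.
by rewrite (mod_lt_eq Hj Hi (esym H1)).
Qed.

Lemma pred_unique u1 u2 v : dbgE k I u1 v -> dbgE k I u2 v -> u1 = u2.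
Proof.
move=> /Eval [i1 Hi1 H1] /Eval [i2 Hi2 H2]; apply: val_inj.
case: H1 => [[-> Hv1]|[-> Hv1]]; case: H2 => [[-> Hv2]|[-> Hv2]].
- apply: Y_mod; apply: modS_inj; apply: Y_inj; by rewrite -Hv1 -Hv2.
- by case: (@YZ_neq i1.+1 i2 Hi2); rewrite -Hv1 -Hv2.
- by case: (@YZ_neq i2.+1 i1 Hi1); rewrite -Hv1 -Hv2.
- apply: Y_mod; apply: Z_inj; by rewrite -Hv1 -Hv2.
Qed.

Lemma pred_exists v : v \in dbgV k I -> exists u, dbgE k I u v.
Proof.
move/nodeV => [i Hi [->|->]]; last by exists (ty i); exact: E_tz.
exists (ty (i + n.-1)); rewrite (@ty_mod i (i + n.-1).+1); first exact: E_ty.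
have -> : (i + n.-1).+1 = i + n by have := n_gt0; lia.
by rewrite modnDr.
Qed.

Lemma indeg1 v : v \in dbgV k I -> indeg (dbgV k I) (dbgE k I) v = 1.
Proof.
move=> Hv; apply/eqP; rewrite eqn_leq; apply/andP; split.
  apply/card_le1_eqP => u1 u2; rewrite !inE => /andP [_ H1] /andP [_ H2].
  exact: pred_unique H2 H1.
rewrite card_gt0; apply/set0Pn; have [u Hu] := pred_exists Hv.
exists u; rewrite inE Hu andbT; by case/and3P: Hu.
Qed.


Local Notation VV := (dbgV k I).
Local Notation EE := (dbgE k I).

Lemma wa_sym : symmetric (weak_adj VV EE).
Proof. by move=> x y; rewrite /weak_adj andbCA orbC. Qed.

Lemma conn_ty i : connect (weak_adj VV EE) (ty 0) (ty i).
Proof.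
elim: i => [|i IH]; first exact: connect0.
apply: connect_trans IH _; apply: connect1.
by rewrite /weak_adj tyV tyV E_ty.
Qed.

Lemma conn_all w : w \in VV -> connect (weak_adj VV EE) (ty 0) w.
Proof.
move/nodeV => [i Hi [->|->]]; first exact: conn_ty.
apply: connect_trans (conn_ty i) _; apply: connect1.
by rewrite /weak_adj tyV tzV // E_tz.
Qed.

Lemma conn_VV v w : v \in VV -> w \in VV -> connect (weak_adj VV EE) v w.
Proof.
move=> Hv Hw; apply: connect_trans (conn_all Hw).
by rewrite (sym_connect_sym wa_sym); exact: conn_all.
Qed.

Lemma necklacesE : necklaces VV EE = [set VV].
Proof.
apply/setP => C; rewrite inE; apply/imsetP/eqP.
  move=> [v Hv ->]; apply/setP => w; rewrite inE.
  by case Hw: (w \in VV); rewrite //= conn_VV.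
move=> ->; exists (ty 0); first exact: tyV.
apply/setP => w; rewrite inE.
by case Hw: (w \in VV); rewrite //= conn_VV // tyV.
Qed.

Lemma N_O0 : N_O VV EE = 0.
Proof.
apply/eqP; rewrite cards_eq0; apply/eqP/setP => C; rewrite !inE necklacesE inE.
apply/negbTE; apply/andP => [[/eqP -> /existsP [v /andP [Hv H0]]]].
by rewrite indeg1 in H0.
Qed.

Lemma outdeg_ty i : i < n -> outdeg VV EE (ty i) != 0.
Proof.
move=> Hi; rewrite -lt0n card_gt0; apply/set0Pn; exists (tz i).
by rewrite inE tzV // E_tz.
Qed.

Lemma outdeg_tz i : i < n -> outdeg VV EE (tz i) = 0.
Proof.
move=> Hi; apply/eqP; rewrite cards_eq0; apply/eqP/setP => w; rewrite !inE.
by rewrite (negbTE (E_from_tz w Hi)) andbF.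
Qed.

Lemma N_Ln : N_L VV EE = n.
Proof.
rewrite /N_L N_O0 subn0.
have -> : [set v in VV | outdeg VV EE v == 0] = [set tz (nat_of_ord i) | i : 'I_n].
  apply/setP => v; rewrite inE; apply/andP/imsetP.
    move=> [/nodeV [i Hi [->|->]] H0]; first by rewrite (negbTE (outdeg_ty Hi)) in H0.
    by exists (Ordinal Hi).
  move=> [i _ ->]; by rewrite tzV // outdeg_tz.
rewrite card_imset ?card_ord //.
move=> i j /tz_inj H; apply: val_inj; exact: mod_lt_eq (ltn_ord i) (ltn_ord j) H.
Qed.

Lemma cover : necklace_cover VV EE EE.
Proof. by split => // v Hv; rewrite indeg1. Qed.


Definition cyc0 := [seq ty i | i <- iota 0 n].

Lemma path_ty a l : path EE (ty a) [seq ty i | i <- iota a.+1 l].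
Proof. by elim: l a => [//|l IH] a /=; rewrite E_ty IH. Qed.

Lemma cyc0_cycle : is_cycle VV EE cyc0.
Proof.
apply/and4P; split.
- by rewrite -size_eq0 size_map size_iota -lt0n n_gt0.
- rewrite map_inj_in_uniq ?iota_uniq // => i j; rewrite !mem_iota /= => Hi Hj.
  by move/ty_inj; apply: mod_lt_eq.
- by apply/allP => x /mapP [i _ ->]; exact: tyV.
have [n' Hn'] : exists n', n = n'.+1 by exists n.-1; have := n_gt0; lia.
rewrite /cyc0 Hn' /= {2}(@ty_mod 0 n'.+1); last by rewrite -Hn' modnn mod0n.
rewrite -map_rcons.
have -> : rcons (iota 1 n') n'.+1 = iota 1 n'.+1.
  by rewrite -cats1 -(addn1 n') iotaD (addnC 1).
exact: path_ty.
Qed.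

Section AnyCycle.
Variable cyc : seq (k.-tuple Sigma).
Hypothesis Hc : is_cycle VV EE cyc.

Lemma cyc_ty x : x \in cyc -> exists2 i, i < n & x = ty i.
Proof.
move=> Hx; case/and4P: Hc => _ _ /allP Hall Hcyc.
have He := next_cycle Hcyc Hx.
have [i Hi [H|H]] := nodeV (Hall _ Hx); first by exists i.
by move: He; rewrite H (negbTE (E_from_tz _ Hi)).
Qed.

Lemma cyc_succ i : ty i \in cyc -> ty i.+1 \in cyc.
Proof.
move=> Hx; case/and4P: Hc => _ _ _ Hcyc.
have Hj : i %% n < n by rewrite ltn_mod n_gt0.
rewrite (@ty_mod i.+1 (i %% n).+1); last by rewrite -addn1 -modnDml addn1.
rewrite (@ty_mod i (i %% n)) ?modn_mod // in Hx.
have He := next_cycle Hcyc Hx.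
have Hn : next cyc (ty (i %% n)) \in cyc by rewrite mem_next.
case: (E_from_ty Hj He) => Heq; first by rewrite -Heq.
have [l _ Hl] := cyc_ty Hn.
by case: (@ty_tz l (i %% n) Hj); rewrite -Hl Heq.
Qed.

Lemma cyc_all j : ty j \in cyc.
Proof.
case/and4P: Hc => Hne _ _ _.
case: cyc Hne cyc_ty cyc_succ => [//|x c] _ Hty Hsucc.
have [i0 Hi0 Hx] := Hty x (mem_head _ _).
have Hall : forall t, ty (i0 + t) \in x :: c.
  elim => [|t IH]; first by rewrite addn0 -Hx mem_head.
  by rewrite addnS; apply: Hsucc.
rewrite (@ty_mod j (i0 + (j %% n + n - i0))); first exact: Hall.
have -> : i0 + (j %% n + n - i0) = j %% n + n by lia.
by rewrite modnDr modn_mod.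
Qed.

Lemma cyc_perm : perm_eq cyc cyc0.
Proof.
case/and4P: Hc => _ Hu _ _.
apply: uniq_perm => //.
  by case/and4P: cyc0_cycle.
move=> x; apply/idP/idP.
  move/cyc_ty => [i Hi ->]; apply/mapP; exists i => //; by rewrite mem_iota.
by move/mapP => [i _ ->]; exact: cyc_all.
Qed.

Lemma size_cyc : size cyc = n.
Proof. by rewrite (perm_size cyc_perm) size_map size_iota. Qed.

Lemma children i : i < n ->
  [set w in VV | EE (ty i) w & w \notin cyc] = [set tz i].
Proof.
move=> Hi; apply/setP => w; rewrite in_set1 in_set; apply/idP/eqP.
  move=> /and3P [_ He Hw]; case: (E_from_ty Hi He) => // Heq.
  by rewrite Heq cyc_all in Hw.
move=> ->; rewrite tzV // E_tz //=; apply/negP => /cyc_ty [l _ Hl].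
exact: (ty_tz Hi (esym Hl)).
Qed.

Lemma count_flat (a : pred (nsym Sigma)) (f : k.-tuple Sigma -> seq (nsym Sigma)) c r :
  (forall v, v \in c -> count a (f v) = r) -> count a (flatten [seq f v | v <- c]) = r * size c.
Proof.
elim: c => [|v c IH] H; first by rewrite muln0.
rewrite /= count_cat H ?mem_head // IH ?mulnS // => x Hx.
by apply: H; rewrite inE Hx orbT.
Qed.

Lemma lab_letter (w : k.-tuple Sigma) : count (@is_letter Sigma) (lab w) = 1.
Proof.
rewrite /lab count_map (eq_count (a2 := predT)) // count_predT size_drop size_tuple.
lia.
Qed.

Lemma lab_paren (w : k.-tuple Sigma) : count (@is_paren Sigma) (lab w) = 0.
Proof. by rewrite /lab count_map (eq_count (a2 := pred0)) // count_pred0. Qed.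

Lemma ns_letter : count (@is_letter Sigma) (necklace_string VV EE cyc) = 2 * n.
Proof.
rewrite /necklace_string -size_cyc; apply: count_flat => v /cyc_ty [i Hi ->].
by rewrite children // enum_set1 /= !cats0 !count_cat /= count_cat !lab_letter.
Qed.

Lemma ns_paren : count (@is_paren Sigma) (necklace_string VV EE cyc) = 2 * n.
Proof.
rewrite /necklace_string -size_cyc; apply: count_flat => v /cyc_ty [i Hi ->].
by rewrite children // enum_set1 /= !cats0 !count_cat /= count_cat !lab_paren.
Qed.

Lemma ns_size : size (necklace_string VV EE cyc) = 4 * n.
Proof.
rewrite -(count_predC (@is_letter Sigma)) ns_letter.
rewrite (eq_count (a2 := @is_paren Sigma)) // ns_paren; lia.
Qed.

End AnyCycle.


Definition Ylist := [seq Y i | i <- iota 0 n].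
Definition Zlist := [seq Z i | i <- iota 0 n].
Definition Vlist := Ylist ++ Zlist.

Lemma uniq_V : uniq Vlist.
Proof.
rewrite cat_uniq; apply/and3P; split.
- rewrite map_inj_in_uniq ?iota_uniq // => i j; rewrite !mem_iota /= => Hi Hj.
  by move/Y_inj; apply: mod_lt_eq.
- apply/hasPn => x /mapP [j]; rewrite mem_iota /= => Hj ->.
  by apply/mapP => [[i _ Heq]]; exact: (YZ_neq Hj (esym Heq)).
- rewrite map_inj_in_uniq ?iota_uniq // => i j; rewrite !mem_iota /= => Hi Hj.
  by move/Z_inj; apply: mod_lt_eq.
Qed.

Lemma node_V x : node x <-> x \in Vlist.
Proof.
split.
  move=> [i Hi [->|->]]; rewrite mem_cat; apply/orP; [left|right];
  by apply/map_f; rewrite mem_iota.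
rewrite mem_cat => /orP [] /mapP [i]; rewrite mem_iota /= => Hi ->;
by exists i => //; first [by left | by right].
Qed.

Lemma size_kmers (z : seq Sigma) : size (kmers k z) = (size z).+1 - k.
Proof. by rewrite /kmers size_map size_iota. Qed.

Lemma sumn_const (T : Type) c (l : seq T) : sumn [seq c | _ <- l] = c * size l.
Proof. elim: l => [|x l IH] /=; [by rewrite muln0 | by rewrite IH mulnS]. Qed.

Lemma sumn_le1 (T : eqType) (f : T -> nat) (l : seq T) :
  (forall x, x \in l -> f x <= 1) -> sumn [seq f x | x <- l] <= size l.
Proof.
elim: l => [//|x l IH] H /=.
have H1 := H x (mem_head _ _).
have H2 : sumn [seq f y | y <- l] <= size l.
  by apply: IH => y Hy; apply: H; rewrite inE Hy orbT.
lia.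
Qed.

Section LowerBound.
Variable S' : seq (seq Sigma).
Hypothesis HS : spss_norep k I S'.

Let L := flatten [seq kmers k z | z <- S'].

Lemma weightE : weight S' = size L + (k - 1) * size S'.
Proof.
case: HS => _ /allP Hall _ _.
rewrite /weight /L; elim: S' Hall => [|z l IH] Hall /=; first by rewrite muln0.
rewrite size_cat IH; last by move=> x Hx; apply: Hall; rewrite inE Hx orbT.
rewrite size_kmers mulnS; have := Hall z (mem_head _ _); lia.
Qed.

Lemma kmer_of (z x : seq Sigma) : z \in S' -> x \in kmers k z -> size x = k /\ node x.
Proof.
move=> Hz Hx.
case: HS => _ /allP Hall Hsp _.
have Hsz : size x == k.
  move: Hx => /mapP [p]; rewrite mem_iota /= => Hp ->.
  rewrite size_takel // size_drop; lia.
split; first exact/eqP.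
have Hw : (Tuple Hsz : k.-tuple Sigma) \in spec k S'.
  by rewrite inE; apply/hasP; exists z.
rewrite Hsp in Hw; exact: ((in_specI (Tuple Hsz)).1 Hw).
Qed.

Lemma count_L x : node x -> count_mem x L = 1.
Proof.
move=> Hx.
have Hsz : size x == k by case: Hx => i _ [->|->]; rewrite ?sizeY ?sizeZ.
case: HS => _ _ Hsp Hc.
have Hw : (Tuple Hsz : k.-tuple Sigma) \in spec k I by apply/in_specI.
have := Hc _ Hw; rewrite /= => <-.
by rewrite /L count_flatten -map_comp.
Qed.

Lemma perm_L : perm_eq L Vlist.
Proof.
apply: uniq_perm; last 1 first.
- move=> x; apply/idP/idP.
    move/flatten_mapP => [z Hz Hx]; apply/node_V; exact: (kmer_of Hz Hx).2.
  move/node_V => Hx; by rewrite -has_pred1 has_count count_L.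
- apply: count_mem_uniq => x; case Hx: (x \in L).
    move/flatten_mapP: Hx => [z Hz Hx]; exact: count_L (kmer_of Hz Hx).2.
  by apply/count_memPn; rewrite Hx.
- exact: uniq_V.
Qed.

Lemma count_Z_L : count (mem Zlist) L = n.
Proof.
rewrite (permP perm_L) count_cat.
have -> : count (mem Zlist) Ylist = 0.
  apply/eqP; rewrite -leqn0 leqNgt -has_count; apply/hasPn => x /mapP [i _ ->].
  apply/mapP => [[j]]; rewrite mem_iota /= => Hj; exact: YZ_neq.
rewrite (@eq_in_count _ _ predT) ?count_predT ?size_map ?size_iota //.
Qed.

Lemma kmers_nthE (z : seq Sigma) p : p < (size z).+1 - k ->
  nth [::] (kmers k z) p = take k (drop p z).
Proof. by move=> Hp; rewrite /kmers (nth_map 0) ?size_iota // nth_iota. Qed.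

Lemma count_Z_string (z : seq Sigma) : z \in S' -> count (mem Zlist) (kmers k z) <= 1.
Proof.
move=> Hz.
set N := (size z).+1 - k.
have Key : forall p, p < N -> take k (drop p z) \in Zlist -> p = N.-1.
  move=> p Hp HZ; apply/eqP; rewrite eqn_leq; apply/andP; split; first lia.
  rewrite leqNgt; apply/negP => Hlt.
  have Hq : take k (drop p.+1 z) \in kmers k z.
    apply/mapP; exists p.+1 => //; rewrite mem_iota /=; rewrite /N in Hp Hlt; lia.
  have [_ Hnq] := kmer_of Hz Hq.
  move: HZ => /mapP [j]; rewrite mem_iota /= => Hj HZ.
  have Hov : ov (Z j) (take k (drop p.+1 z)).
    rewrite /ov -HZ take_takel; last lia.
    have -> : drop p.+1 z = drop 1 (drop p z) by rewrite drop_drop add1n.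
    rewrite (take_drop (k - 1) 1).
    by have -> : k - 1 + 1 = k by lia.
  case: Hnq => i _ [Heq|Heq]; rewrite Heq in Hov.
    exact: ov_Z_Y Hj Hov.
  exact: ov_Z_Z Hj Hov.
rewrite /kmers count_map -/N.
have E1 : count (preim (fun i => take k (drop i z)) (mem Zlist)) (iota 0 N) =
  count (fun p => (p < N) && (take k (drop p z) \in Zlist)) (iota 0 N).
  by apply: eq_in_count => p; rewrite mem_iota /= => ->.
rewrite E1.
apply: leq_trans (_ : count (pred1 N.-1) (iota 0 N) <= 1).
  apply: sub_count => p /andP [Hp H]; apply/eqP; exact: Key.
by rewrite count_uniq_mem ?iota_uniq // leq_b1.
Qed.

Lemma lower : (k + 1) * n <= weight S'.
Proof.
rewrite weightE (perm_size perm_L) size_cat !size_map size_iota.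
have Hn : n <= size S'.
  rewrite -{1}count_Z_L /L count_flatten -map_comp.
  apply: sumn_le1 => z Hz; exact: count_Z_string.
have : (k - 1) * n <= (k - 1) * size S' by rewrite leq_mul2l Hn orbT.
nia.
Qed.

End LowerBound.

Lemma S0_spss : spss_norep k I S0.
Proof.
split.
- rewrite map_inj_in_uniq ?iota_uniq // => i j; rewrite !mem_iota /= => Hi Hj Heq.
  have := congr1 (take k) Heq; rewrite !take_size_cat ?sizeY // => /Y_inj.
  exact: mod_lt_eq.
- by apply/allP => x /mapP [i _ ->]; rewrite size_cat sizeY leq_addr.
- apply/setP => w; apply/idP/idP => H.
    by apply/in_specI; exact: ((in_specS0 w).1 H).
  by apply/in_specS0; exact: ((in_specI w).1 H).
move=> w /(fun H => (in_specI w).1 H) [j Hj Hw].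
rewrite /S0 -map_comp.
have Hm : {in iota 0 n, (fun z => count_mem (val w) (kmers k z)) \o (fun i => Y i ++ [:: b i]) =1 (fun i => nat_of_bool (i == j))}.
  move=> i; rewrite mem_iota /= => Hi; rewrite /= kmers_yb /=.
  case: Hw => ->.
  - rewrite (_ : (Z i == Y j) = false); last by apply/negbTE/eqP => /esym /(YZ_neq Hi).
    have -> : (Y i == Y j) = (i == j); last by rewrite /= !addn0.
    apply/eqP/eqP => [/Y_inj|->] //; exact: mod_lt_eq.
  - case: (Y i =P Z j) => [/(YZ_neq Hj) //|_] /=.
    have -> : (Z i == Z j) = (i == j); last by rewrite /= !addn0.
    apply/eqP/eqP => [/Z_inj|->] //; exact: mod_lt_eq.
rewrite ((eq_in_map _ _ _).1 Hm).
rewrite sumn_count (@eq_count _ _ (pred1 j)) // count_uniq_mem ?iota_uniq // mem_iota /=; by rewrite Hj.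
Qed.

Lemma S0_weight : weight S0 = (k + 1) * n.
Proof.
rewrite /weight /S0 -map_comp.
rewrite (@eq_map _ _ _ (fun _ => k + 1)); last by move=> i /=; rewrite size_cat sizeY.
by rewrite sumn_const size_iota.
Qed.



Lemma main_sec :
  let n := size S in
  let X := S ++ take k S in
  let y := fun i => cyc_sub S i k in
  let z := fun i => cyc_sub S i.+1 (k - 1) ++ [:: b i] in
  let I := X :: [seq y i ++ [:: b i] | i <- iota 0 n] in
  let V := dbgV k I in
  let E := dbgE k I in
  [/\ uniq ([seq y i | i <- iota 0 n] ++ [seq z i | i <- iota 0 n]),
      (forall w : k.-tuple Sigma,
          w \in V <-> exists2 i, i < n & (val w = y i \/ val w = z i)),
      (forall u v : k.-tuple Sigma,
          E u v <-> exists2 i, i < n &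
             ((val u = y i /\ val v = y i.+1) \/ (val u = y i /\ val v = z i))),
      [/\ necklace_cover V E E, #|necklaces V E| = 1, N_O V E = 0,
          N_L V E = n &
          (exists cyc, is_cycle V E cyc) /\
          (forall cyc, is_cycle V E cyc ->
             let s := necklace_string V E cyc in
             [/\ count (@is_letter Sigma) s = 2 * n,
                 count (@is_paren Sigma) s = 2 * n &
                 size s = 4 * n])] &
      (forall S' : seq (seq Sigma), spss_norep k I S' -> (k + 1) * n <= weight S') /\
      (exists S' : seq (seq Sigma), spss_norep k I S' /\ weight S' = (k + 1) * n)].
Proof.
move=> /=; split.
- exact: uniq_V.
- exact: inV.
- exact: Eval.
- split.
  + exact: cover.
  + by rewrite necklacesE cards1.
  + exact: N_O0.
  + exact: N_Ln.
  + split; first by exists cyc0; exact: cyc0_cycle.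
    move=> cyc Hc /=; split; [exact: ns_letter | exact: ns_paren | exact: ns_size].
- split; first by move=> S' HS; exact: lower.
  by exists S0; split; [exact: S0_spss | exact: S0_weight].
Qed.

End Main.

Unset Implicit Arguments.

Theorem mainTheorem6 (Sigma : finType) (k : nat) (S : seq Sigma) (b : nat -> Sigma) :
  2 <= #|Sigma| -> 4 <= k ->
  cyclic_deBruijn S (k - 2) ->
  (forall i, i < size S -> Some (b i) != cnth S (i + k)) ->
  let n := size S in
  let X := S ++ take k S in
  let y := fun i => cyc_sub S i k in
  let z := fun i => cyc_sub S i.+1 (k - 1) ++ [:: b i] in
  let I := X :: [seq y i ++ [:: b i] | i <- iota 0 n] in
  let V := dbgV k I in
  let E := dbgE k I in
  (* 1. nodes and edges of the de Bruijn graph *)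
  [/\ uniq ([seq y i | i <- iota 0 n] ++ [seq z i | i <- iota 0 n]),
      (forall w : k.-tuple Sigma,
          w \in V <-> exists2 i, i < n & (val w = y i \/ val w = z i)),
      (forall u v : k.-tuple Sigma,
          E u v <-> exists2 i, i < n &
             ((val u = y i /\ val v = y i.+1) \/ (val u = y i /\ val v = z i))),
  (* 2. F = E is a necklace cover with a single closed necklace *)
      [/\ necklace_cover V E E, #|necklaces V E| = 1, N_O V E = 0,
          N_L V E = n &
          (exists cyc, is_cycle V E cyc) /\
          (forall cyc, is_cycle V E cyc ->
             let s := necklace_string V E cyc in
             [/\ count (@is_letter Sigma) s = 2 * n,
                 count (@is_paren Sigma) s = 2 * n &
                 size s = 4 * n])] &
  (* 3. minimum weight of a no-repetition SPSS *)
      (forall S' : seq (seq Sigma), spss_norep k I S' -> (k + 1) * n <= weight S') /\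
      (exists S' : seq (seq Sigma), spss_norep k I S' /\ weight S' = (k + 1) * n)].
Proof.
move=> Hs Hk HdB Hb; exact: (main_sec (b 0) Hs Hk HdB Hb).
Qed.
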